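(* Let $\mathcal{X}\subseteq\mathbb{R}^d$ be a nonempty compact convex set and let $f:\mathbb{R}^d\to\mathbb{R}$ be Lipschitz continuous and Clarke regular (for all $x,v$ the limit $f'(x;v)=\lim_{t\downarrow0}\frac{f(x+tv)-f(x)}{t}$ exists). Fix $\lambda>0$ and let $r(\lambda)\ge0$, where $r:(0,\infty)\to[0,\infty)$ is a function with $r(\lambda)\to0$ as $\lambda\to0$ such that $\nabla f_\lambda(x)\in\partial f(x)+B(0,r(\lambda))$ for all $x\in\mathcal{X}$, with $f_\lambda(x)=\mathbb{E}_{u\sim\mathcal{N}(0,I)}[f(x+\lambda u)]$. For $(x,y)\in\mathcal{X}\times\mathbb{R}^d$ define $$\hat{\mathcal{N}}_{\mathcal{X}}(x)=\{\eta\in\mathcal{N}_{\mathcal{X}}(x):\ \|\eta\|\le 2\|y\|\},\qquad H_1(x,y)=-\big(y+\hat{\mathcal{N}}_{\mathcal{X}}(x)\big),\qquad H_2(x,y)=-\big(y-\partial f(x)\big)+B(0,r(\lambda)).$$ Then $H_1$ and $H_2$ are Marchaud maps on $\mathcal{X}\times\mathbb{R}^d$.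
   Context: $\mathcal{N}_{\mathcal{X}}(x)$ is the normal cone of the convex set $\mathcal{X}$ at $x\in\mathcal{X}$; note $\hat{\mathcal{N}}_{\mathcal{X}}(x)$ depends on $y$ as well. $\partial f(x)$ is the Clarke subdifferential of $f$ at $x$ ($\overline{\mathrm{conv}}$ of limits of gradients $\nabla f(x_k)$ along sequences $x_k\to x$ of differentiability points). $B(0,\rho)$ is the closed ball of radius $\rho$ about $0$; set sums are Minkowski sums, so $-(y-\partial f(x))=\{-y+g: g\in\partial f(x)\}$. A set-valued map $H$ defined on pairs $(x,y)$ is Marchaud if: (a) each $H(x,y)$ is nonempty, convex and compact; (b) there is $K>0$ with $\sup_{z\in H(x,y)}\|z\|\le K(1+\|x\|+\|y\|)$ for all $(x,y)$; (c) it is upper semicontinuous in the sense that whenever $(x_n,y_n)\to(x,y)$, $z_n\in H(x_n,y_n)$ and $z_n\to z$, then $z\in H(x,y)$. *)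

(* Defs.v *)
From HB Require Import structures.
From mathcomp Require Import all_boot all_order all_algebra.
From mathcomp Require Import all_classical all_reals all_analysis.
Set Implicit Arguments. Unset Strict Implicit. Unset Printing Implicit Defensive.
Import Order.TTheory GRing.Theory Num.Theory.
Import numFieldNormedType.Exports.
Local Open Scope classical_set_scope.
Local Open Scope ring_scope.

Section Defs.
Variables (R : realType) (d : nat).
Local Notation V := 'rV[R]_d.

Definition dotv (u v : V) : R := \sum_(i < d) u 0 i * v 0 i.
Definition enorm (v : V) : R := Num.sqrt (dotv v v).

Definition eball0 (rho : R) : set V := [set v | enorm v <= rho].

Definition mink_sum (A B : set V) : set V := [set a + b | a in A & b in B].

Definition is_convex (C : set V) : Prop :=
  forall a b t, C a -> C b -> 0 <= t <= 1 -> C (t *: a + (1 - t) *: b).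

Definition normal_cone (X : set V) (x : V) : set V :=
  [set eta | forall z, X z -> dotv eta (z - x) <= 0].

Definition has_gradient (f : V -> R) (x g : V) : Prop :=
  forall eps : R, 0 < eps -> exists2 delta : R, 0 < delta &
    forall h : V, enorm h < delta ->
      `|f (x + h) - f x - dotv g h| <= eps * enorm h.

Definition limiting_gradients (f : V -> R) (x : V) : set V :=
  [set g | exists (xk gk : nat -> V),
     (forall k, has_gradient f (xk k) (gk k)) /\
     xk @ \oo --> x /\ gk @ \oo --> g].

Definition closed_conv_hull (A : set V) : set V :=
  [set v | forall C : set V, closed C -> is_convex C -> A `<=` C -> C v].

Definition clarke_subdiff (f : V -> R) (x : V) : set V :=
  closed_conv_hull (limiting_gradients f x).

Definition marchaud (X : set V) (H : V -> V -> set V) : Prop :=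
  (forall x y, X x ->
     H x y !=set0 /\ is_convex (H x y) /\ compact (H x y)) /\
  (exists2 K : R, 0 < K &
     forall x y z, X x -> H x y z -> enorm z <= K * (1 + enorm x + enorm y)) /\
  (forall (xn yn zn : nat -> V) (x y z : V),
     (forall n, X (xn n)) -> X x ->
     xn @ \oo --> x -> yn @ \oo --> y ->
     (forall n, H (xn n) (yn n) (zn n)) -> zn @ \oo --> z ->
     H x y z).

End Defs.

(* Expectation of g(u) for u ~ N(0, I_d), as the iterated integral of g
   against the product of standard normal densities (coordinate by coordinate). *)
Fixpoint gauss_expect (R : realType) (d : nat) : ('rV[R]_d -> R) -> R :=
  match d return ('rV[R]_d -> R) -> R with
  | 0 => fun g => g 0
  | n.+1 => fun g =>
      \int[@lebesgue_measure R]_(t in setT)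
        (normal_pdf 0 1 t * gauss_expect (fun v : 'rV[R]_n => g (row_mx (\row_(_ < 1) t) v)))
  end.

Definition gauss_smooth (R : realType) (d : nat) (f : 'rV[R]_d -> R) (lam : R)
  (x : 'rV[R]_d) : R := gauss_expect (fun u => f (x + lam *: u)).

(* Main.v *)
Require Import Defs.
From HB Require Import structures.
From mathcomp Require Import all_boot all_order all_algebra.
From mathcomp Require Import all_classical all_reals all_analysis.
From mathcomp Require Import ring lra.
Set Implicit Arguments. Unset Strict Implicit. Unset Printing Implicit Defensive.
Import Order.TTheory GRing.Theory Num.Theory.
Import numFieldNormedType.Exports.
Local Open Scope classical_set_scope.
Local Open Scope ring_scope.
Section Euclid.
Variables (R : realType) (d : nat).
Local Notation V := 'rV[R]_d.
Implicit Types u v w : V.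

Lemma dotvC u v : dotv u v = dotv v u.
Proof. by rewrite /dotv; apply: eq_bigr => i _; rewrite mulrC. Qed.
Lemma dotvDl u v w : dotv (u + v) w = dotv u w + dotv v w.
Proof. by rewrite /dotv -big_split; apply: eq_bigr => i _; rewrite mxE mulrDl. Qed.
Lemma dotvZl (t : R) u v : dotv (t *: u) v = t * dotv u v.
Proof. by rewrite /dotv mulr_sumr; apply: eq_bigr => i _; rewrite mxE mulrA. Qed.
Lemma dotvNl u v : dotv (- u) v = - dotv u v.
Proof. by rewrite -scaleN1r dotvZl mulN1r. Qed.
Lemma dotvBl u v w : dotv (u - v) w = dotv u w - dotv v w.
Proof. by rewrite dotvDl dotvNl. Qed.
Lemma dotvDr u v w : dotv w (u + v) = dotv w u + dotv w v.
Proof. by rewrite dotvC dotvDl !(dotvC w). Qed.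
Lemma dotvZr (t : R) u v : dotv v (t *: u) = t * dotv v u.
Proof. by rewrite dotvC dotvZl dotvC. Qed.
Lemma dotvBr u v w : dotv w (u - v) = dotv w u - dotv w v.
Proof. by rewrite dotvC dotvBl !(dotvC w). Qed.
Lemma dotv0l v : dotv 0 v = 0.
Proof. by rewrite /dotv big1 // => i _; rewrite mxE mul0r. Qed.
Lemma dotv0r v : dotv v 0 = 0.
Proof. by rewrite dotvC dotv0l. Qed.
Lemma dotvv_ge0 v : 0 <= dotv v v.
Proof. by rewrite /dotv; apply: sumr_ge0 => i _; rewrite -expr2 sqr_ge0. Qed.
Lemma dotvv_eq0 v : dotv v v = 0 -> v = 0.
Proof.
move=> /psumr_eq0P H; apply/rowP => i; rewrite mxE.
have /eqP := H (fun j _ => ltac:(by rewrite -expr2 sqr_ge0)) i isT.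
by rewrite mulf_eq0 orbb => /eqP.
Qed.

Lemma enorm_ge0 v : 0 <= enorm v.
Proof. exact: sqrtr_ge0. Qed.
Lemma enorm_sq v : enorm v ^+ 2 = dotv v v.
Proof. exact/sqr_sqrtr/dotvv_ge0. Qed.
Lemma enormZ (t : R) v : enorm (t *: v) = `|t| * enorm v.
Proof. by rewrite /enorm dotvZl dotvZr mulrA -expr2 sqrtrM ?sqr_ge0 // sqrtr_sqr. Qed.
Lemma enormN v : enorm (- v) = enorm v.
Proof. by rewrite -scaleN1r enormZ normrN1 mul1r. Qed.
Lemma enorm0 : enorm (0 : V) = 0.
Proof. by rewrite /enorm dotv0l sqrtr0. Qed.
Lemma enorm_eq0 v : enorm v = 0 -> v = 0.
Proof. by move=> h; apply: dotvv_eq0; rewrite -enorm_sq h expr0n. Qed.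
Lemma enormB u v : enorm (u - v) = enorm (v - u).
Proof. by rewrite -enormN opprB. Qed.

Lemma CS u v : dotv u v <= enorm u * enorm v.
Proof.
have [v0|vn0] := eqVneq v 0.
  by rewrite v0 dotv0r enorm0 mulr0.
have apos : 0 < dotv v v.
  rewrite lt_def dotvv_ge0 andbT; apply/eqP => /dotvv_eq0; exact/eqP.
set a := dotv v v in apos *; set b := dotv u v; set c := dotv u u.
set t := b / a.
have hta : t * a = b by rewrite /t divfK // gt_eqF.
have h := dotvv_ge0 (u - t *: v).
rewrite dotvBl !dotvBr !dotvZl !dotvZr (dotvC v u) -/a -/b -/c in h.
rewrite hta subrr subr0 in h.
have := mulr_ge0 (ltW apos) h.
rewrite mulrBr mulrA (mulrC a t) hta subr_ge0 => hb.
apply: (le_trans (ler_norm b)).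
rewrite -sqrtr_sqr /enorm -sqrtrM ?dotvv_ge0 // ler_sqrt; last first.
  by rewrite mulr_ge0 // dotvv_ge0.
by rewrite mulrC.
Qed.

Lemma CSabs u v : `|dotv u v| <= enorm u * enorm v.
Proof.
rewrite ler_norml CS andbT lerNl -dotvNl.
by rewrite -(enormN u) CS.
Qed.

Lemma enormD u v : enorm (u + v) <= enorm u + enorm v.
Proof.
rewrite -(ger0_norm (addr_ge0 (enorm_ge0 u) (enorm_ge0 v))) -sqrtr_sqr.
rewrite /enorm ler_sqrt ?sqr_ge0 // -!/(enorm _).
rewrite dotvDl !dotvDr -!enorm_sq (dotvC v u).
have := CS u v; rewrite sqrrD mulr2n; lra.
Qed.

Lemma enorm_coord v i : `|v 0 i| <= enorm v.
Proof.
rewrite -sqrtr_sqr /enorm ler_sqrt ?dotvv_ge0 // /dotv (bigD1 i) //= expr2.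
rewrite lerDl; apply: sumr_ge0 => j _; by rewrite -expr2 sqr_ge0.
Qed.
End Euclid.
Section Topo.
Variables (R : realType) (d : nat).
Local Notation V := 'rV[R]_d.
Implicit Types v w a : V.

Lemma mxn_le_enorm v : `|v| <= enorm v.
Proof.
rewrite (_ : `|v| = mx_norm v) // mx_normrE; apply: bigmax_le; first exact: enorm_ge0.
by move=> [i j] _ /=; rewrite (ord1 i); exact: enorm_coord.
Qed.

Lemma coord_le_mxn v i : `|v 0 i| <= `|v|.
Proof.
rewrite (_ : `|v| = mx_norm v) // mx_normrE.
by apply/bigmax_geP; right; exists (0, i).
Qed.

Lemma enorm_le_mxn v : enorm v <= (d%:R + 1) * `|v|.
Proof.
have n0 : 0 <= `|v| by [].
have -> : (d%:R + 1) * `|v| = Num.sqrt (((d%:R + 1) * `|v|) ^+ 2).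
  by rewrite sqrtr_sqr ger0_norm // mulr_ge0 // addr_ge0.
rewrite /enorm ler_sqrt ?sqr_ge0 // /dotv.
apply: (@le_trans _ _ (\sum_(i < d) `|v| ^+ 2)).
  apply: ler_sum => i _; rewrite -expr2 -real_normK ?num_real //.
  by rewrite lerXn2r ?nnegrE // coord_le_mxn.
rewrite sumr_const card_ord -[X in X <= _]mulr_natl exprMn.
apply: ler_wpM2r; first exact: sqr_ge0.
have := ler0n R d; nra.
Qed.

Local Notation C := (d%:R + 1 : R).
Lemma C_gt0 : 0 < C. Proof. by rewrite ltr_wpDl. Qed.

Lemma cvg_enorm (u : nat -> V) a : u @ \oo --> a ->
  forall e : R, 0 < e -> exists N, forall n, (N <= n)%N -> enorm (u n - a) < e.
Proof.
move=> /cvgrPdist_lt H e e0.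
have [N _ HN] := H (e / C) (divr_gt0 e0 C_gt0).
exists N => n /HN /= h.
rewrite enormB; apply: (le_lt_trans (enorm_le_mxn _)).
by rewrite mulrC -ltr_pdivlMr ?C_gt0.
Qed.

Lemma enorm_cvg (u : nat -> V) a :
  (forall e : R, 0 < e -> exists N, forall n, (N <= n)%N -> enorm (u n - a) < e) ->
  u @ \oo --> a.
Proof.
move=> H; apply/cvgrPdist_lt => e e0.
have [N HN] := H e e0.
exists N => // n /HN h /=.
by apply: le_lt_trans (mxn_le_enorm _) _; rewrite enormB.
Qed.

Lemma closure_enorm (A : set V) v : closure A v ->
  forall e : R, 0 < e -> exists a, A a /\ enorm (v - a) < e.
Proof.
move=> H e e0.
have [a [Aa]] := H _ (nbhsx_ballx v (e / C) (divr_gt0 e0 C_gt0)).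
rewrite -ball_normE /= => h; exists a; split => //.
apply: (le_lt_trans (enorm_le_mxn _)).
by rewrite mulrC -ltr_pdivlMr ?C_gt0.
Qed.

Lemma enorm_closed (A : set V) v : closed A ->
  (forall e : R, 0 < e -> exists a, A a /\ enorm (v - a) < e) -> A v.
Proof.
move=> cA H; apply: cA => B /nbhs_ballP [e /= e0 hB].
have [a [Aa h]] := H e e0.
exists a; split => //; apply: hB.
rewrite -ball_normE /=.
exact: le_lt_trans (mxn_le_enorm _) h.
Qed.

Lemma closed_enorm (A : set V) :
  (forall v, (forall e : R, 0 < e -> exists a, A a /\ enorm (v - a) < e) -> A v) ->
  closed A.
Proof. by move=> H v /closure_enorm hv; apply: H. Qed.

Lemma compact_cluster (A : set V) (u : nat -> V) : compact A ->
  (forall n, A (u n)) ->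
  exists h, A h /\ forall e : R, 0 < e -> forall N, exists n, (N <= n)%N /\ enorm (u n - h) < e.
Proof.
move=> cA Au.
have FA : (u @ \oo) A by exists 0%N => // n _; exact: Au.
have [h [Ah ch]] := cA (u @ \oo) _ FA.
exists h; split => // e e0 N.
have FN : (u @ \oo) [set w | exists2 n, (N <= n)%N & u n = w].
  by exists N => // n hn; exists n.
have [w [[n Nn <-] hw]] := ch _ (ball h (e / C)) FN (nbhsx_ballx h _ (divr_gt0 e0 C_gt0)).
exists n; split => //.
move: hw; rewrite -ball_normE /= => hw.
rewrite enormB; apply: (le_lt_trans (enorm_le_mxn _)).
by rewrite mulrC -ltr_pdivlMr ?C_gt0.
Qed.

Lemma enorm_bounded (A : set V) M :
  (forall v, A v -> enorm v <= M) -> bounded_set A.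
Proof.
move=> H; exists M; split; first by rewrite num_real.
move=> K MK v /H hv /=.
exact: le_trans (mxn_le_enorm _) (le_trans hv (ltW MK)).
Qed.
End Topo.
Section Aux.
Variables (R : realType) (d : nat).
Local Notation V := 'rV[R]_d.
Implicit Types v w a b c : V.

Lemma inv_small (e : R) : 0 < e -> exists N, forall n, (N <= n)%N -> (n.+1%:R)^-1 < e.
Proof.
move=> e0; exists (Num.Def.archi_bound (e^-1)) => n hn.
have hb : e^-1 < (Num.Def.archi_bound e^-1)%:R.
  by apply: archi_boundP; rewrite invr_ge0 ltW.
rewrite -[e]invrK ltf_pV2 ?posrE ?invr_gt0 ?ltr0Sn //.
apply: lt_le_trans hb _; rewrite ler_nat; exact: leqW.
Qed.

Lemma enorm_tri v a c : enorm (v - c) <= enorm (v - a) + enorm (a - c).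
Proof.
have -> : v - c = (v - a) + (a - c) by rewrite addrA subrK.
exact: enormD.
Qed.

Lemma enorm_le_tri v a : enorm v <= enorm a + enorm (v - a).
Proof.
by have := enormD a (v - a); rewrite (addrC a) subrK.
Qed.

Lemma enorm_convex (t : R) a b : 0 <= t <= 1 ->
  enorm (t *: a + (1 - t) *: b) <= t * enorm a + (1 - t) * enorm b.
Proof.
move=> /andP[t0 t1].
apply: le_trans (enormD _ _) _.
by rewrite !enormZ ger0_norm // ger0_norm // subr_ge0.
Qed.

Lemma eball0_convex (r : R) : is_convex (@eball0 R d r).
Proof.
move=> a b t /= ha hb ht; apply: le_trans (enorm_convex _ _ ht) _.
case/andP: ht => t0 t1.
have h1 : t * enorm a <= t * r by rewrite ler_wpM2l.
have h2 : (1 - t) * enorm b <= (1 - t) * r by rewrite ler_wpM2l // subr_ge0.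
lra.
Qed.

Lemma eball0_closed (r : R) : closed (@eball0 R d r).
Proof.
apply: closed_enorm => v H /=; apply/ler_addgt0Pr => e e0.
have [a [ha hva]] := H e e0.
apply: le_trans (enorm_le_tri v a) _; rewrite /eball0 /= in ha.
by rewrite lerD // ltW.
Qed.

Lemma eball0_compact (r : R) : compact (@eball0 R d r).
Proof.
apply: bounded_closed_compact; last exact: eball0_closed.
by apply: (@enorm_bounded _ _ _ r).
Qed.

Lemma seq_closed (A : set V) :
  (forall (u : nat -> V) v, (forall n, A (u n)) -> u @ \oo --> v -> A v) -> closed A.
Proof.
move=> H; apply: closed_enorm => v hv.
have : forall k : nat, exists a, A a /\ enorm (v - a) < (k.+1%:R)^-1.
  by move=> k; apply: hv; rewrite invr_gt0 ltr0Sn.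
move=> /choice [u hu]; apply: (H u); first by move=> n; case: (hu n).
apply: enorm_cvg => e e0; have [N HN] := inv_small e0.
exists N => n /HN; rewrite enormB; apply: le_lt_trans.
by case: (hu n) => _ /ltW.
Qed.

Lemma cch_sub (A C : set V) : closed C -> is_convex C -> A `<=` C ->
  closed_conv_hull A `<=` C.
Proof. by move=> cC vC AC v; apply. Qed.

Lemma cch_convex (A : set V) : is_convex (closed_conv_hull A).
Proof.
move=> a b t ha hb ht C cC vC AC; apply: (vC); [exact: ha | exact: hb | exact: ht].
Qed.

Lemma cch_closed (A : set V) : closed (closed_conv_hull A).
Proof.
apply: closed_enorm => v H C cC vC AC.
apply: (enorm_closed cC) => e e0.
have [a [ha hva]] := H e e0; exists a; split => //; exact: ha.
Qed.

Definition Deps (C : set V) (e : R) : set V :=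
  [set v | forall eta : R, 0 < eta -> exists c, C c /\ enorm (v - c) < e + eta].

Lemma Deps_closed C e : closed (Deps C e).
Proof.
apply: closed_enorm => v H eta eta0.
have eta2 : 0 < eta / 2 by rewrite divr_gt0.
have [a [ha hva]] := H _ eta2.
have [c [hc hac]] := ha _ eta2.
exists c; split => //; apply: le_lt_trans (enorm_tri v a c) _.
have -> : e + eta = eta / 2 + (e + eta / 2) by field.
exact: ltrD.
Qed.

Lemma Deps_convex C e : is_convex C -> is_convex (Deps C e).
Proof.
move=> vC v1 v2 t h1 h2 ht eta eta0.
have eta2 : 0 < eta / 2 by rewrite divr_gt0.
have [c1 [hc1 n1]] := h1 _ eta2.
have [c2 [hc2 n2]] := h2 _ eta2.
exists (t *: c1 + (1 - t) *: c2); split; first exact: vC.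
have -> : t *: v1 + (1 - t) *: v2 - (t *: c1 + (1 - t) *: c2) =
          t *: (v1 - c1) + (1 - t) *: (v2 - c2).
  by rewrite !scalerBr opprD addrACA.
apply: le_lt_trans (enorm_convex _ _ ht) _.
case/andP: ht => t0 t1.
have i1 : t * enorm (v1 - c1) <= t * (e + eta / 2) by rewrite ler_wpM2l // ltW.
have i2 : (1 - t) * enorm (v2 - c2) <= (1 - t) * (e + eta / 2).
  by rewrite ler_wpM2l ?subr_ge0 // ltW.
have : e + eta / 2 < e + eta by rewrite ltrD2l ltr_pdivrMr // ltr_pMr // ltr1n.
lra.
Qed.

End Aux.
Section Clarke.
Variables (R : realType) (d : nat) (f : 'rV[R]_d -> R) (L : R).
Local Notation V := 'rV[R]_d.
Implicit Types v w a b c x g : V.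
Hypothesis L0 : 0 <= L.
Hypothesis Lip : forall x y, `|f x - f y| <= L * enorm (x - y).

Lemma grad_bound x g : has_gradient f x g -> enorm g <= L.
Proof.
move=> hg; have [->|gn0] := eqVneq g 0; first by rewrite enorm0.
have ng : 0 < enorm g.
  by rewrite lt_def enorm_ge0 andbT; apply/eqP => /enorm_eq0; apply/eqP.
apply/ler_addgt0Pr => e e0.
have [del del0 hdel] := hg e e0.
set t := del / (2 * enorm g).
have t0 : 0 < t by rewrite divr_gt0 // mulr_gt0.
have hs : t * enorm g = del / 2.
  by rewrite /t; field; rewrite gt_eqF.
have ht : enorm (t *: g) < del.
  by rewrite enormZ gtr0_norm // hs ltr_pdivrMr // ltr_pMr // ltr1n.
have := hdel _ ht; rewrite dotvZr -enorm_sq enormZ (gtr0_norm t0).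
have := Lip (x + t *: g) x; rewrite (addrC x (t *: g)) addrK enormZ (gtr0_norm t0).
set s := t * enorm g.
have s0 : 0 < s by rewrite mulr_gt0.
have -> : t * enorm g ^+ 2 = s * enorm g by rewrite /s expr2 mulrA.
move=> h1 h2.
have : s * enorm g <= s * (L + e).
  move: h1 h2; rewrite !ler_norml => /andP[h1 h1'] /andP[h2 h2'].
  rewrite mulrDr; lra.
by rewrite ler_pM2l.
Qed.

Lemma LG_bound x g : limiting_gradients f x g -> enorm g <= L.
Proof.
move=> [xk [gk [hg [_ cg]]]].
apply/ler_addgt0Pr => e e0.
have [N HN] := cvg_enorm cg e0.
apply: le_trans (enorm_le_tri g (gk N)) _.
apply: lerD; first exact: grad_bound (hg N).
by rewrite enormB; apply/ltW/HN.
Qed.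

Lemma subdiff_bound x g : clarke_subdiff f x g -> enorm g <= L.
Proof.
move=> h; apply: (cch_sub (@eball0_closed R d L) (@eball0_convex R d L) _ h).
move=> v; exact: LG_bound.
Qed.

Lemma LG_eps_inv x g : limiting_gradients f x g ->
  forall e : R, 0 < e -> exists p q, has_gradient f p q /\ enorm (p - x) < e /\ enorm (q - g) < e.
Proof.
move=> [xk [gk [hg [cx cg]]]] e e0.
have [N1 H1] := cvg_enorm cx e0.
have [N2 H2] := cvg_enorm cg e0.
exists (xk (maxn N1 N2)), (gk (maxn N1 N2)); split => //.
by split; [apply: H1 | apply: H2]; rewrite leq_max leqnn ?orbT.
Qed.

Lemma LG_eps x g :
  (forall e : R, 0 < e -> exists p q, has_gradient f p q /\ enorm (p - x) < e /\ enorm (q - g) < e)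
  -> limiting_gradients f x g.
Proof.
move=> H.
have : forall k : nat, exists pq : V * V, has_gradient f pq.1 pq.2 /\
    enorm (pq.1 - x) < (k.+1%:R)^-1 /\ enorm (pq.2 - g) < (k.+1%:R)^-1.
  move=> k; have [p [q hpq]] : exists p q, has_gradient f p q /\ enorm (p - x) < (k.+1%:R)^-1 /\ enorm (q - g) < (k.+1%:R)^-1.
    by apply: H; rewrite invr_gt0 ltr0Sn.
  by exists (p, q).
move=> /choice [pq hpq].
exists (fun k => (pq k).1), (fun k => (pq k).2); split; first by move=> k; case: (hpq k).
split; apply: enorm_cvg => e e0; have [N HN] := inv_small e0;
  exists N => n /HN; apply: le_lt_trans; case: (hpq n) => _ [/ltW h1 /ltW h2] //.
Qed.

Lemma grad_near x (C : set V) e : closed C -> limiting_gradients f x `<=` C -> 0 < e ->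
  exists2 del : R, 0 < del & forall p q, has_gradient f p q -> enorm (p - x) < del ->
    exists c, C c /\ enorm (q - c) < e.
Proof.
move=> cC LC e0.
case: (pselect (exists2 del : R, 0 < del & forall p q, has_gradient f p q ->
   enorm (p - x) < del -> exists c, C c /\ enorm (q - c) < e)) => // nH.
have : forall k : nat, exists pq : V * V, has_gradient f pq.1 pq.2 /\
    enorm (pq.1 - x) < (k.+1%:R)^-1 /\ forall c, C c -> e <= enorm (pq.2 - c).
  move=> k; apply: contrapT => nex; apply: nH.
  exists (k.+1%:R)^-1; first by rewrite invr_gt0 ltr0Sn.
  move=> p q hg hp; apply: contrapT => nc; apply: nex; exists (p, q).
  split => //; split => // c Cc; rewrite leNgt; apply/negP => hlt.
  by apply: nc; exists c.
move=> /choice [pq hpq].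
have [h [_ hh]] := compact_cluster (@eball0_compact R d L)
  (fun n => ltac:(case: (hpq n) => hg _; exact: grad_bound hg)).
have LGh : limiting_gradients f x h.
  apply: LG_eps => e1 e10.
  have [N HN] := inv_small e10.
  have [n [Nn hn]] := hh e1 e10 N.
  exists (pq n).1, (pq n).2; case: (hpq n) => hg [hp _]; split => //; split => //.
  exact: lt_trans hp (HN _ Nn).
have [n [_ hn]] := hh e e0 0%N.
case: (hpq n) => _ [_ hc].
by have := hc h (LC _ LGh); rewrite leNgt hn.
Qed.

Lemma clarke_usc x g :
  (forall e : R, 0 < e -> exists x' g', enorm (x' - x) < e /\ enorm (g' - g) < e /\
     clarke_subdiff f x' g') -> clarke_subdiff f x g.
Proof.
move=> H C cC vC LC.
apply: (enorm_closed cC) => e e0.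
set e1 := e / 4.
have e10 : 0 < e1 by rewrite divr_gt0.
have [del del0 hdel] := grad_near cC LC e10.
have m0 : 0 < Order.min (del / 2) e1 by rewrite lt_min e10 divr_gt0.
have [x' [g' [hx [hg hs]]]] := H _ m0.
move: hx hg; rewrite !lt_min => /andP[hx _] /andP[_ hg].
have sub : limiting_gradients f x' `<=` Deps C e1.
  move=> h /LG_eps_inv hh eta eta0.
  have m1 : 0 < Order.min (del / 2) eta by rewrite lt_min eta0 divr_gt0.
  have [p [q [hgr [hp hq]]]] := hh _ m1.
  move: hp hq; rewrite !lt_min => /andP[hp _] /andP[_ hq].
  have hpx : enorm (p - x) < del.
    apply: le_lt_trans (enorm_tri p x' x) _.
    have -> : del = del / 2 + del / 2 by field.
    exact: ltrD.
  have [c [Cc hc]] := hdel _ _ hgr hpx.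
  exists c; split => //; apply: le_lt_trans (enorm_tri h q c) _.
  by rewrite addrC ltrD // enormB.
have := hs _ (@Deps_closed R d C e1) (@Deps_convex R d C e1 vC) sub.
move=> /(_ e1 e10) [c [Cc hc]].
exists c; split => //; apply: le_lt_trans (enorm_tri g g' c) _.
rewrite enormB.
have -> : e = e1 + (e1 + e1) + e1 by rewrite /e1; field.
lra.
Qed.

End Clarke.
Section Alg.
Variables (R : realType) (d : nat).
Local Notation V := 'rV[R]_d.
Implicit Types a b c e : V.

Lemma id1 a b c e : (- a - b) - (- c - e) = (c - a) + (e - b).
Proof. by rewrite opprD !opprK addrACA (addrC (- a)) (addrC (- b)). Qed.

Lemma conv_aff (t : R) c a b :
  t *: (c + a) + (1 - t) *: (c + b) = c + (t *: a + (1 - t) *: b).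
Proof.
by rewrite !scalerDr addrACA -scalerDl (addrC t) subrK scale1r.
Qed.

Lemma conv_opp (t : R) a b : t *: - a + (1 - t) *: - b = - (t *: a + (1 - t) *: b).
Proof. by rewrite !scalerN opprD. Qed.

Lemma dotv_approx a b (c : R) :
  (forall eps : R, 0 < eps -> exists a' b', enorm (a' - a) < eps /\ enorm (b' - b) < eps /\ dotv a' b' <= c)
  -> dotv a b <= c.
Proof.
move=> H; apply/ler_addgt0Pr => e e0.
set M := enorm a + enorm b + 1.
have M0 : 0 < M by rewrite /M ltr_wpDl // addr_ge0 // enorm_ge0.
set eps := Order.min 1 (e / M).
have eps0 : 0 < eps by rewrite lt_min ltr01 divr_gt0.
have [a' [b' [ha [hb hc]]]] := H _ eps0.
have -> : dotv a b = dotv a' b' + dotv (a - a') b' + dotv a (b - b').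
  by rewrite dotvBl dotvBr; ring.
have hb' : enorm b' <= enorm b + 1.
  apply: le_trans (enorm_le_tri b' b) _; rewrite lerD2l ltW //.
  by apply: lt_le_trans hb _; rewrite ge_min lexx.
have h1 : dotv (a - a') b' <= eps * (enorm b + 1).
  apply: le_trans (CS _ _) _; apply: ler_pM; rewrite ?enorm_ge0 //.
  by rewrite enormB ltW.
have h2 : dotv a (b - b') <= enorm a * eps.
  apply: le_trans (CS _ _) _; apply: ler_wpM2l; first exact: enorm_ge0.
  by rewrite enormB ltW.
have h3 : eps * M <= e.
  by rewrite -ler_pdivlMr // ge_min lexx orbT.
rewrite /M in h3; lra.
Qed.
End Alg.

Section H1.
Variables (R : realType) (d : nat) (X : set 'rV[R]_d).
Local Notation V := 'rV[R]_d.

Local Notation H1 := (fun x y : V =>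
    [set - (y + eta) | eta in [set eta | normal_cone X x eta /\ enorm eta <= 2 * enorm y]]).

Lemma H1_usc (xn yn zn : nat -> V) (x y z : V) :
     (forall n, X (xn n)) -> X x ->
     xn @ \oo --> x -> yn @ \oo --> y ->
     (forall n, H1 (xn n) (yn n) (zn n)) -> zn @ \oo --> z ->
     H1 x y z.
Proof.
move=> Xn Xx cx cy hz cz.
have etaE : forall n, exists2 eta, (normal_cone X (xn n) eta /\ enorm eta <= 2 * enorm (yn n))
   & eta = - zn n - yn n.
  move=> n; have [eta he <-] := hz n; exists eta => //.
  by rewrite opprK (addrC (yn n)) addrK.
exists (- z - y); last by rewrite addrCA subrr addr0 opprK.
split.
  move=> w Xw; apply: dotv_approx => eps eps0.
  have e2 : 0 < eps / 2 by rewrite divr_gt0.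
  have [N1 H1] := cvg_enorm cx eps0.
  have [N2 H2] := cvg_enorm cy e2.
  have [N3 H3] := cvg_enorm cz e2.
  set n := maxn N1 (maxn N2 N3).
  have [hN1 [hN2 hN3]] : (N1 <= n /\ N2 <= n /\ N3 <= n)%N.
    by rewrite /n !leq_max !leqnn !orbT.
  have [eta [hnc _] etaeq] := etaE n; rewrite etaeq in hnc.
  exists (- zn n - yn n), (w - xn n); split; last split.
  - rewrite id1; apply: le_lt_trans (enormD _ _) _.
    have -> : eps = eps / 2 + eps / 2 by field.
    by rewrite ltrD // enormB ?H3 ?H2.
  - by rewrite opprB addrC addrA subrK enormB H1.
  - exact: hnc.
apply/ler_addgt0Pr => e e0.
have e4 : 0 < e / 4 by rewrite divr_gt0.
have [N2 H2] := cvg_enorm cy e4.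
have [N3 H3] := cvg_enorm cz e4.
set n := maxn N2 N3.
have [hN2 hN3] : (N2 <= n /\ N3 <= n)%N by rewrite /n !leq_max !leqnn !orbT.
have [eta [_ hn] etaeq] := etaE n; rewrite etaeq in hn.
apply: le_trans (enorm_le_tri _ (- zn n - yn n)) _.
rewrite id1.
have h1 := enormD (zn n - z) (yn n - y).
have h2 := enorm_le_tri (yn n) y.
have h3 := H2 n hN2; have h4 := H3 n hN3.


have : e = e / 4 + e / 4 + e / 4 + e / 4 by field.
lra.
Qed.

Lemma H1_marchaud : marchaud X H1.
Proof.
split; last split.
- move=> x y Xx.
  have usc_xy : forall (u : nat -> V) v, (forall n, H1 x y (u n)) -> u @ \oo --> v -> H1 x y v.
    move=> u v hu cu; apply: (@H1_usc (fun=> x) (fun=> y) u) => //; exact: cvg_cst.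
  split; last split.
  + exists (- (y + 0)), 0 => //; split; last by rewrite enorm0 mulr_ge0 ?enorm_ge0.
    by move=> w _; rewrite dotv0l.
  + move=> _ _ t [e1 [n1 b1] <-] [e2 [n2 b2] <-] ht.
    exists (t *: e1 + (1 - t) *: e2); last by rewrite conv_opp conv_aff.
    split.
      move=> w Xw; rewrite dotvDl !dotvZl.
      case/andP: ht => t0 t1.
      have := n1 w Xw; have := n2 w Xw.
      move=> h2 h1.
      have : t * dotv e1 (w - x) <= 0 by rewrite mulr_ge0_le0.
      have : (1 - t) * dotv e2 (w - x) <= 0 by rewrite mulr_ge0_le0 // subr_ge0.
      lra.
    apply: le_trans (enorm_convex _ _ ht) _.
    case/andP: ht => t0 t1.
    have i1 : t * enorm e1 <= t * (2 * enorm y) by rewrite ler_wpM2l.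
    have i2 : (1 - t) * enorm e2 <= (1 - t) * (2 * enorm y) by rewrite ler_wpM2l // subr_ge0.
    lra.
  + apply: bounded_closed_compact; last exact: seq_closed.
    apply: (@enorm_bounded _ _ _ (3 * enorm y)) => _ [e [_ he] <-].
    rewrite enormN; apply: le_trans (enormD _ _) _; lra.
- exists 3 => // x y _ _ [e [_ he] <-].
  rewrite enormN; apply: le_trans (enormD _ _) _.
  have := enorm_ge0 x; lra.
- exact: H1_usc.
Qed.
End H1.
Section Alg2. Variables (R : realType) (d : nat).
Local Notation V := 'rV[R]_d.
Lemma id2 (a b c : V) : -(a - b) + (c + a - b) = c.
Proof. by rewrite opprB addrC addrA subrK addrK. Qed.
Lemma id3 (z y g z' y' g' : V) : (z + y - g) - (z' + y' - g') = (z - z') + (y - y') - (g - g').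
Proof. rewrite !opprB (addrACA z) -opprD addrACA [RHS]addrACA. by rewrite (addrC (- g)). Qed.
Lemma id4 (y g b : V) : -(y - g) + b = - y + (g + b).
Proof. by rewrite opprB addrA (addrC g). Qed.
Lemma id6 (a b c : V) : (-(a - b) + c) + a - b = c.
Proof. by rewrite opprB (addrC (b - a)) -!addrA addKr subrr addr0. Qed.
Lemma enorm3 (p q s : V) : enorm (p + q - s) <= enorm p + enorm q + enorm s.
Proof.
apply: le_trans (enormD _ _) _; rewrite enormN lerD2r; exact: enormD.
Qed.
End Alg2.

Section H2.
Variables (R : realType) (d : nat) (X : set 'rV[R]_d) (f : 'rV[R]_d -> R) (L rl : R).
Local Notation V := 'rV[R]_d.
Hypothesis L0 : 0 <= L.
Hypothesis Lip : forall x y, `|f x - f y| <= L * enorm (x - y).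
Hypothesis rl0 : 0 <= rl.
Hypothesis nonempty : forall x, X x -> exists g, clarke_subdiff f x g.

Local Notation H2 := (fun x y : V =>
    mink_sum [set - (y - g) | g in clarke_subdiff f x] (eball0 rl)).

Lemma H2_usc (xn yn zn : nat -> V) (x y z : V) :
     (forall n, X (xn n)) -> X x ->
     xn @ \oo --> x -> yn @ \oo --> y ->
     (forall n, H2 (xn n) (yn n) (zn n)) -> zn @ \oo --> z ->
     H2 x y z.
Proof.
move=> Xn Xx cx cy hz cz.
have : forall n, exists gb : V * V, clarke_subdiff f (xn n) gb.1 /\ enorm gb.2 <= rl /\
   zn n + yn n - gb.1 = gb.2.
  move=> n; have [_ [g hg <-] [b hb <-]] := hz n; exists (g, b); split => //; split => //.
  exact: id6.
move=> /choice [gb hgb].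
have hgL : forall n, eball0 L (gb n).1.
  by move=> n; case: (hgb n) => hg _; exact: (subdiff_bound L0 Lip hg).
have [g [_ hh]] := compact_cluster (@eball0_compact R d L) hgL.
exists (- (y - g)); first exists g => //.
  apply: (clarke_usc L0 Lip) => e e0.
  have [N HN] := cvg_enorm cx e0.
  have [n [Nn hn]] := hh e e0 N.
  exists (xn n), (gb n).1; split; first exact: HN.
  by split => //; case: (hgb n).
exists (z + y - g); last exact: id2.
rewrite /eball0 /=; apply/ler_addgt0Pr => e e0.
have e3 : 0 < e / 3 by rewrite divr_gt0.
have [N1 H1] := cvg_enorm cz e3.
have [N2 H2] := cvg_enorm cy e3.
have [n [Nn hn]] := hh _ e3 (maxn N1 N2).
move: Nn; rewrite geq_max => /andP[n1 n2].
case: (hgb n) => _ [hb beq].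
apply: le_trans (enorm_le_tri _ (gb n).2) _.
have -> : z + y - g - (gb n).2 = (z - zn n) + (y - yn n) - (g - (gb n).1).
  by rewrite -beq id3.
have := enorm3 (z - zn n) (y - yn n) (g - (gb n).1).
have := H1 n n1; have := H2 n n2.
rewrite (enormB z) (enormB y) (enormB g).
have : e = e / 3 + e / 3 + e / 3 by field.
lra.
Qed.

Lemma H2_marchaud : marchaud X H2.
Proof.
split; last split.
- move=> x y Xx.
  have usc_xy : forall (u : nat -> V) v, (forall n, H2 x y (u n)) -> u @ \oo --> v -> H2 x y v.
    move=> u v hu cu; apply: (@H2_usc (fun=> x) (fun=> y) u) => //; exact: cvg_cst.
  split; last split.
  + have [g hg] := nonempty Xx.
    exists (- (y - g) + 0), (- (y - g)); first by exists g.
    by exists 0; rewrite // /eball0 /= enorm0.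
  + move=> _ _ t [_ [g1 hg1 <-] [b1 hb1 <-]] [_ [g2 hg2 <-] [b2 hb2 <-]] ht.
    exists (- (y - (t *: g1 + (1 - t) *: g2))).
      by exists (t *: g1 + (1 - t) *: g2) => //; apply: cch_convex.
    exists (t *: b1 + (1 - t) *: b2); first exact: eball0_convex.
    by rewrite !id4 conv_aff !scalerDr addrACA.
  + apply: bounded_closed_compact; last exact: seq_closed.
    apply: (@enorm_bounded _ _ _ (enorm y + L + rl)) => _ [_ [g hg <-] [b hb <-]].
    apply: le_trans (enormD _ _) _; rewrite enormN.
    have := enormD y (- g); rewrite enormN.
    have := subdiff_bound L0 Lip hg; rewrite /eball0 /= in hb; lra.
- exists (1 + L + rl); first by rewrite ltr_wpDr // ltr_wpDr // ltr01.
  move=> x y _ _ [_ [g hg <-] [b hb <-]].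
  apply: le_trans (enormD _ _) _; rewrite enormN.
  have := enormD y (- g); rewrite enormN.
  have := subdiff_bound L0 Lip hg; rewrite /eball0 /= in hb.
  have ex := enorm_ge0 x; have ey := enorm_ge0 y.
  have : 0 <= (L + rl) * enorm x + (L + rl) * enorm y.
    by rewrite addr_ge0 // mulr_ge0 // addr_ge0.
  rewrite !mulrDl !mulrDr; lra.
- exact: H2_usc.
Qed.
End H2.

Theorem lemma2 (R : realType) (d : nat) (X : set 'rV[R]_d)
  (f : 'rV[R]_d -> R) (r : R -> R) (lam : R) :
  X !=set0 -> compact X -> is_convex X ->
  (exists L : R, forall x y, `|f x - f y| <= L * enorm (x - y)) ->
  (forall x v : 'rV[R]_d, exists l : R,
      (fun t : R => (f (x + t *: v) - f x) / t) @ 0^'+ --> l) ->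
  (forall l : R, 0 < l -> 0 <= r l) ->
  r @ 0^'+ --> 0 ->
  (forall l : R, 0 < l -> forall x, X x ->
      exists g, has_gradient (gauss_smooth f l) x g /\
                mink_sum (clarke_subdiff f x) (eball0 (r l)) g) ->
  0 < lam ->
  marchaud X (fun x y =>
    [set - (y + eta) | eta in [set eta | normal_cone X x eta /\ enorm eta <= 2 * enorm y]])
  /\
  marchaud X (fun x y =>
    mink_sum [set - (y - g) | g in clarke_subdiff f x] (eball0 (r lam))).
Proof.
move=> _ _ _ [L Lip] _ r0 _ hsm lam0.
set L' := Num.max L 0.
have L0 : 0 <= L' by rewrite le_max lexx orbT.
have Lip' : forall x y, `|f x - f y| <= L' * enorm (x - y).
  move=> x y; apply: le_trans (Lip x y) _.
  by rewrite ler_wpM2r ?enorm_ge0 // le_max lexx.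
split; first exact: H1_marchaud.
apply: (H2_marchaud L0 Lip' (r0 _ lam0)).
move=> x Xx; have [g [_ [a ha _]]] := hsm _ lam0 _ Xx; by exists a.
Qed.
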